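(* There is a function $q(k)\in\Theta(k^2)$ such that the following holds. Let $G$ be a graph, let $k$ be the number of robots of a CSMP instance on $G$, let $H_w$ be a strong $q(k)$-haven anchored at a vertex $w$, and let $\hat H_w$ be the graph obtained as the union of $H_w$ and three edges of $G$ incident to $w$. Let $S\subseteq\mathcal R$ be a set of robots located on vertices of $H_w$ in configuration $\iota$, and assume no robot outside $S$ is located on a vertex of $\hat H_w$. Then for every configuration $\iota'$ of $S$ with respect to $H_w$, there is a sequence of $O(k^6)$ sliding moves, each along a path of $\hat H_w$, that transforms $\iota$ into $\iota'$.
   Context: Robots and sliding moves: robots occupy pairwise distinct vertices of $G$; a sliding move moves one robot along a simple path of $G$ from its current vertex to another vertex such that no other robot is located on any vertex of that path, all other robots staying put. For a set $S$ of robots and a subgraph $H$ of $G$, a configuration of $S$ with respect to $H$ is an injection $\iota:S\to V(H)$ (the positions of the robots of $S$). The length of a path is its number of edges; for a path $P$ and vertices $u,v$ on it, the $P$-distance between $u$ and $v$ is the length of the subpath of $P$ between $u$ and $v$. Havens: for $q\in\mathbb N$, a vertex $w$ of degree at least three in $G$ lying on a path $P$ of length $q$ is a $q$-anchor, and $P$ is a $q$-haven anchored at $w$. $P$ is a $q$-haven for a vertex $v$ (anchored at $w$) if $v$ lies on $P$ and has $P$-distance at least $\lceil q/3\rceil$ and at most $\lfloor 2q/3\rfloor$ from $w$. $P$ is a strong $q$-haven anchored at $w$ if it is a $q$-haven anchored at $w$ for both endpoints of $P$. *)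

(* Defs.v *)
(* Graphs: G is a finite simple graph given by a symmetric,
   irreflexive relation e on a finType V. *)
From mathcomp Require Import all_boot.
Set Implicit Arguments. Unset Strict Implicit. Unset Printing Implicit Defensive.

Definition deg (V : finType) (e : rel V) (v : V) : nat := #|[set u | e v u]|.

(* A simple path of the graph e, as the nonempty duplicate-free sequence of
   its vertices; its length is (size p).-1 (number of edges). *)
Definition is_spath (V : eqType) (e : rel V) (p : seq V) : bool :=
  if p is x :: s then path e x s && uniq p else false.

Definition Pdist (V : eqType) (P : seq V) (u v : V) : nat :=
  (index u P - index v P) + (index v P - index u P).

Definition haven_for (V : finType) (e : rel V) (q : nat) (P : seq V) (w v : V) : bool :=
  [&& is_spath e P, size P == q.+1, w \in P, 3 <= deg e w, v \in P,
      (q + 2) %/ 3 <= Pdist P v w & Pdist P v w <= (2 * q) %/ 3].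

Definition strong_haven (V : finType) (e : rel V) (q : nat) (P : seq V) (w : V) : bool :=
  haven_for e q P w (head w P) && haven_for e q P w (last w P).

Definition adj_in (V : eqType) (P : seq V) (x y : V) : bool :=
  has (fun pr => (pr == (x, y)) || (pr == (y, x))) (zip P (behead P)).

Definition hat_edge (V : eqType) (P : seq V) (w : V) (N : seq V) (x y : V) : bool :=
  [|| adj_in P x y, (x == w) && (y \in N) | (y == w) && (x \in N)].

Definition hat_vert (V : eqType) (P : seq V) (N : seq V) (x : V) : bool :=
  (x \in P) || (x \in N).

Definition slide_move (Rob V : eqType) (h : rel V) (c c' : Rob -> V) : Prop :=
  exists (r : Rob) (p : seq V),
    [/\ is_spath h p, head (c r) p = c r, last (c r) p = c' r, c r != c' r &
        forall r', r' != r -> c' r' = c r' /\ c r' \notin p].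

Fixpoint chain (T : Type) (R : T -> T -> Prop) (x : T) (s : seq T) : Prop :=
  match s with
  | [::] => True
  | y :: s' => R x y /\ chain R y s'
  end.

(* Main.v *)
Require Import Defs.
From mathcomp Require Import all_boot.
From Stdlib Require Import FunctionalExtensionality.
From mathcomp Require Import zify.
From Stdlib Require Import Lia.
Set Implicit Arguments. Unset Strict Implicit. Unset Printing Implicit Defensive.

Lemma spathE (V : eqType) (h : rel V) p :
  is_spath h p = [&& sorted h p, uniq p & p != [::]].
Proof. by case: p => //= x s; rewrite andbT. Qed.

Lemma sorted_rev_sym (V : eqType) (h : rel V) p :
  symmetric h -> sorted h (rev p) = sorted h p.
Proof.
move=> hs; rewrite rev_sorted.
have -> : (fun z => h^~ z) = h by apply: functional_extensionality => a;
  apply: functional_extensionality => b; rewrite hs.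
done.
Qed.

Lemma head_rev (V : eqType) (d x : V) s : head d (rev (x :: s)) = last x s.
Proof. by rewrite lastI rev_rcons. Qed.

Lemma last_rev (V : eqType) (d x : V) s : last d (rev (x :: s)) = x.
Proof. by rewrite rev_cons last_rcons. Qed.

Lemma spath_rev (V : eqType) (h : rel V) p :
  symmetric h -> is_spath h (rev p) = is_spath h p.
Proof.
by move=> hs; rewrite !spathE sorted_rev_sym // rev_uniq -!size_eq0 size_rev.
Qed.

Section Reach.
Variables (Rob V : eqType) (h : rel V).

Definition reach (c d : Rob -> V) (n : nat) : Prop :=
  exists cs, [/\ chain (@slide_move Rob V h) c cs, last c cs = d & size cs <= n].

Lemma chain_cat (R : (Rob -> V) -> (Rob -> V) -> Prop) x s1 s2 :
  chain R x s1 -> chain R (last x s1) s2 -> chain R x (s1 ++ s2).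
Proof. by elim: s1 x => //= y s IH x [H1 H2] H3; split => //; apply: IH. Qed.

Lemma reach_refl c n : reach c c n.
Proof. by exists [::]. Qed.

Lemma reach_mono c d n m : n <= m -> reach c d n -> reach c d m.
Proof. by move=> nm [cs [H1 H2 H3]]; exists cs; split => //; apply: leq_trans nm. Qed.

Lemma reach_trans c d f n m : reach c d n -> reach d f m -> reach c f (n + m).
Proof.
move=> [cs [H1 H2 H3]] [cs' [H1' H2' H3']]; exists (cs ++ cs'); split.
- by apply: chain_cat => //; rewrite H2.
- by rewrite last_cat H2.
- by rewrite size_cat leq_add.
Qed.

Lemma reach_step c d : @slide_move Rob V h c d -> reach c d 1.
Proof. by move=> H; exists [:: d]. Qed.

Hypothesis hs : symmetric h.

Lemma slide_sym c d : @slide_move Rob V h c d -> @slide_move Rob V h d c.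
Proof.
move=> [r [p [Hp Hh Hl Hne Ho]]].
exists r, (rev p); split.
- by rewrite spath_rev.
- by case: p Hp Hh Hl {Ho} => //= x s _ Hh Hl; rewrite head_rev Hl.
- by case: p Hp Hh Hl {Ho} => //= x s _ Hh Hl; rewrite last_rev Hh.
- by rewrite eq_sym.
- move=> r' /Ho [-> Hn]; split => //; by rewrite mem_rev.
Qed.

Lemma reach_sym c d n : reach c d n -> reach d c n.
Proof.
move=> [cs [H1 H2 H3]]; apply: (reach_mono H3); rewrite -H2 {H2 H3}.
elim: cs c H1 => [|y cs IH] c /=; first by move=> _; apply: reach_refl.
move=> [Hs Hc]; rewrite -addn1; apply: reach_trans (IH _ Hc) _.
by apply: reach_step; apply: slide_sym.
Qed.

End Reach.

Lemma sorted_catl (V : eqType) (h : rel V) s1 s2 : sorted h (s1 ++ s2) -> sorted h s1.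
Proof. by case: s1 => //= x s; rewrite cat_path => /andP[]. Qed.

Lemma sorted_catr (V : eqType) (h : rel V) s1 s2 : sorted h (s1 ++ s2) -> sorted h s2.
Proof. by case: s1 => //= x s; rewrite cat_path => /andP[_ /path_sorted]. Qed.

Lemma sorted_drop (V : eqType) (h : rel V) i s : sorted h s -> sorted h (drop i s).
Proof. by rewrite -{1}(cat_take_drop i s) => /sorted_catr. Qed.

Lemma sorted_take (V : eqType) (h : rel V) i s : sorted h s -> sorted h (take i s).
Proof. by rewrite -{1}(cat_take_drop i s) => /sorted_catl. Qed.

Lemma idx_drop (V : eqType) (s : seq V) i y : uniq s -> y \in drop i s -> i <= index y s.
Proof.
move=> Hu Hy; have Hi : i <= size s.
  by rewrite leqNgt; apply/negP => Hlt; move: Hy; rewrite drop_oversize // ltnW.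
move: Hu; rewrite -(cat_take_drop i s) cat_uniq => /and3P[_ Hd _].
have Hn : y \notin take i s by apply/negP => Ht; move/hasP: Hd; apply; exists y.
by rewrite index_cat (negbTE Hn) size_take_min (minn_idPl Hi) leq_addr.
Qed.

Definition upd (Rob V : eqType) (c : Rob -> V) (r : Rob) (y : V) : Rob -> V :=
  fun x => if x == r then y else c x.

Lemma upd_id (Rob V : eqType) (c : Rob -> V) r : upd c r (c r) = c.
Proof. by apply: functional_extensionality => x; rewrite /upd; case: eqP => // ->. Qed.

Lemma upd_inj (Rob V : eqType) (c : Rob -> V) r y :
  injective c -> (forall x, x != r -> c x != y) -> injective (upd c r y).
Proof.
move=> Hc Hy a b; rewrite /upd.
case: (eqVneq a r) => [->|Ha]; case: (eqVneq b r) => [->|Hb] //.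
- by move=> E; move: (Hy _ Hb); rewrite E eqxx.
- by move=> E; move: (Hy _ Ha); rewrite E eqxx.
- by apply: Hc.
Qed.

Lemma move1 (Rob V : eqType) (h : rel V) (c : Rob -> V) r p y :
  is_spath h p -> head (c r) p = c r -> last (c r) p = y ->
  (forall r', r' != r -> c r' \notin p) -> reach h c (upd c r y) 1.
Proof.
move=> Hp Hh Hl Ho; case: (eqVneq (c r) y) => [<-|Hne].
  by rewrite upd_id; apply: reach_refl.
apply: reach_step; exists r, p; split => //.
- by rewrite /upd eqxx.
- by rewrite /upd eqxx.
- by move=> r' Hr'; rewrite /upd (negbTE Hr'); split => //; apply: Ho.
Qed.

Lemma compress (Rob : finType) (V : eqType) (h : rel V) (Q : seq V) (c : Rob -> V) :
  sorted h Q -> uniq Q -> injective c ->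
  exists d, [/\ reach h c d #|[set r | c r \in Q]|, injective d,
     (forall r, c r \notin Q -> d r = c r) &
     (forall r, c r \in Q -> d r \in drop (size Q - #|[set r | c r \in Q]|) Q)].
Proof.
elim/last_ind: Q c => [|Q' v IH] c Hs Hu Hc.
  exists c; split => //; first by apply: reach_refl.
set Q := rcons Q' v in Hs Hu *.
set T := [set r | c r \in Q].
have [T0|[r0 Hr0]] := set_0Vmem T.
  exists c; split => //; first by apply: reach_refl.
  move=> r Hr; have : r \in T by rewrite inE.
  by rewrite T0 inE.
case: (@arg_maxnP _ r0 (fun x => x \in T) (fun x => index (c x) Q) Hr0) => r Hr Hmax.
have HrQ : c r \in Q by move: Hr; rewrite inE.
set i := index (c r) Q.
have Hi : i < size Q by rewrite index_mem.
have HuQ' : v \notin Q' /\ uniq Q' by move: Hu; rewrite rcons_uniq => /andP[].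
have Hiv : i <= size Q' by move: Hi; rewrite size_rcons.
set p := drop i Q.
have Hother : forall x, x != r -> c x \notin p.
  move=> x Hx; apply/negP => Hxp.
  have HxQ : c x \in Q by apply: mem_drop Hxp.
  have Hle : index (c x) Q <= i by apply: Hmax; rewrite inE.
  have Hge := idx_drop Hu Hxp.
  have E : index (c x) Q = i by apply/eqP; rewrite eqn_leq Hle Hge.
  move/negP: Hx; apply; apply/eqP; apply: Hc.
  by rewrite -(nth_index (c x) HxQ) -(nth_index (c x) HrQ) E.
have Hpv : p = rcons (drop i Q') v by rewrite /p /Q drop_rcons.
have Hv : forall x, x != r -> c x != v.
  by move=> x Hx; apply/negP => /eqP E; move: (Hother _ Hx); rewrite E Hpv mem_rcons mem_head.
have Hm : reach h c (upd c r v) 1.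
  apply: (@move1 _ _ _ _ _ p).
  - by rewrite spathE sorted_drop // drop_uniq // -size_eq0 size_drop subn_eq0 -ltnNge.
  - by rewrite /p (drop_nth (c r) Hi) /= nth_index.
  - by rewrite Hpv last_rcons.
  - exact: Hother.
have Hc1 : injective (upd c r v) by apply: upd_inj.
have HsQ' : sorted h Q' by move: Hs; rewrite /Q -cats1 => /sorted_catl.
have [d [Hr1 Hdi Hd1 Hd2]] := IH _ HsQ' HuQ'.2 Hc1.
have HT' : [set x | upd c r v x \in Q'] = T :\ r.
  apply/setP => x; rewrite !inE /upd; case: (eqVneq x r) => [_|Hx] /=.
    by rewrite (negbTE HuQ'.1).
  by rewrite /Q mem_rcons in_cons (negbTE (Hv _ Hx)).
have HcT : #|T| = (#|T :\ r|).+1 by rewrite (cardsD1 r T) Hr.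
rewrite HT' in Hr1 Hd2.
exists d; split => //.
- by rewrite HcT -add1n; apply: reach_trans Hm Hr1.
- move=> x Hx; have Hxr : x != r by apply/negP => /eqP E; move: Hx; rewrite E HrQ.
  rewrite Hd1 /upd (negbTE Hxr) //.
  by move: Hx; rewrite /Q mem_rcons in_cons negb_or => /andP[].
- move=> x Hx; rewrite HcT /Q size_rcons subSS drop_rcons ?leq_subr // mem_rcons in_cons.
  case: (eqVneq x r) => [E|Hxr].
    by rewrite Hd1 /upd E eqxx ?eqxx // (negbTE HuQ'.1).
  apply/orP; right; apply: Hd2.
  by rewrite /upd (negbTE Hxr); move: Hx; rewrite /Q mem_rcons in_cons (negbTE (Hv _ Hxr)).
Qed.

Lemma legs_sorted (V : eqType) (h : rel V) w X Y :
  symmetric h -> path h w X -> path h w Y -> sorted h (rev X ++ w :: Y).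
Proof.
move=> hs HX HY; rewrite sorted_cat_cons HY andbT -rev_cons sorted_rev_sym //.
Qed.

Lemma legs_uniq (V : eqType) (w : V) X Y : uniq (w :: X ++ Y) -> uniq (rev X ++ w :: Y).
Proof.
move=> Hu; rewrite (perm_uniq (_ : perm_eq _ (w :: X ++ Y))) //.
have -> : w :: Y = [:: w] ++ Y by [].
have -> : w :: X ++ Y = [:: w] ++ X ++ Y by [].
by rewrite perm_catCA perm_cat2l perm_cat2r perm_rev.
Qed.

Lemma legs_mem (V : eqType) (w : V) X Y y :
  (y \in rev X ++ w :: Y) = [|| y \in X, y == w | y \in Y].
Proof. by rewrite mem_cat mem_rev in_cons. Qed.

Lemma uniq_legsC (V : eqType) (w : V) X Y : uniq (w :: X ++ Y) = uniq (w :: Y ++ X).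
Proof. by rewrite !cons_uniq !mem_cat orbC (perm_uniq (permEl (perm_catC X Y))). Qed.

Lemma uniq_legs_sub (V : eqType) (w : V) X Y X' Y' :
  subseq X X' -> subseq Y Y' -> uniq (w :: X' ++ Y') -> uniq (w :: X ++ Y).
Proof.
move=> HX HY; apply: subseq_uniq; rewrite /= eqxx; exact: cat_subseq.
Qed.

Lemma uniq_legs_disj (V : eqType) (w : V) X Y y :
  uniq (w :: X ++ Y) -> y \in X -> y \in Y -> False.
Proof.
rewrite cons_uniq cat_uniq => /andP[_ /and3P[_ /hasP H _]] HX HY; apply: H; by exists y.
Qed.

Lemma uniq_legs_w (V : eqType) (w : V) X Y :
  uniq (w :: X ++ Y) -> (w \notin X) && (w \notin Y).
Proof. by rewrite cons_uniq mem_cat negb_or => /andP[]. Qed.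

Lemma uniq_legs_l (V : eqType) (w : V) X Y : uniq (w :: X ++ Y) -> uniq X.
Proof. by rewrite cons_uniq cat_uniq => /andP[_ /andP[]]. Qed.

Lemma uniq_legs_r (V : eqType) (w : V) X Y : uniq (w :: X ++ Y) -> uniq Y.
Proof. by rewrite cons_uniq cat_uniq => /and3P[_ _ /andP[]]. Qed.

Lemma card_on (Rob : finType) (V : eqType) (d : Rob -> V) (Q : seq V) (o : seq Rob) :
  (forall x, d x \in Q -> x \in o) -> #|[set x | d x \in Q]| <= size o.
Proof.
move=> H; apply: leq_trans (card_size o).
rewrite -cardsE; apply: subset_leq_card; apply/subsetP => x; rewrite !inE; exact: H.
Qed.

Lemma drop_legs_sub (V : eqType) (w : V) X Y t y :
  t <= size Y -> y \in drop (size (rev X ++ w :: Y) - t) (rev X ++ w :: Y) -> y \in Y.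
Proof.
move=> Ht; rewrite -cat_rcons drop_cat size_cat !size_rcons size_rev.
have -> : (size X).+1 + size Y - t < (size X).+1 = false.
  by apply/negbTE; rewrite -leqNgt -addnBA // leq_addr.
by move/mem_drop.
Qed.

Lemma compress_leg (Rob : finType) (V : eqType) (h : rel V) w X Y (o : seq Rob)
    (d : Rob -> V) :
  symmetric h -> path h w X -> path h w Y -> uniq (w :: X ++ Y) -> injective d ->
  (forall x, d x \in rev X ++ w :: Y -> x \in o) -> size o <= size Y ->
  exists d', [/\ reach h d d' (size o), injective d',
     (forall x, d x \notin rev X ++ w :: Y -> d' x = d x) &
     (forall x, d x \in rev X ++ w :: Y -> d' x \in Y)].
Proof.
move=> hs HX HY Hu Hd Ho HoY.
have [d' [H1 H2 H3 H4]] := compress (legs_sorted hs HX HY) (legs_uniq Hu) Hd.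
have Hc := card_on Ho.
exists d'; split => //.
- exact: reach_mono H1.
- move=> x /H4; apply: drop_legs_sub; exact: leq_trans HoY.
Qed.

Definition spider (V : eqType) (h : rel V) w A B C :=
  [&& uniq (w :: A ++ B ++ C), path h w A, path h w B, path h w C & C != [::]].

Lemma idx_take (V : eqType) (s : seq V) j y : y \in take j s -> index y s < j.
Proof.
move=> Hy; rewrite -(cat_take_drop j s) index_cat Hy.
have := index_mem y (take j s); rewrite Hy size_take_min => H.
exact: leq_trans H (geq_minl _ _).
Qed.

Lemma path_take (V : eqType) (h : rel V) w s j : path h w s -> path h w (take j s).
Proof. by rewrite -{1}(cat_take_drop j s) cat_path => /andP[]. Qed.

Lemma take_sub (V : eqType) (s : seq V) j : subseq (take j s) s.
Proof. by rewrite -{2}(cat_take_drop j s) prefix_subseq. Qed.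

Lemma arith6 n : 4 * n + 2 = n + n + n + 1 + n + 1.
Proof. lia. Qed.

Lemma bring (Rob : finType) (V : eqType) (h : rel V) w A B C (o : seq Rob)
    (c : Rob -> V) r :
  symmetric h -> spider h w A B C -> injective c ->
  (forall x, (c x \in w :: A ++ B ++ C) = (x \in o)) ->
  size o <= size A -> size o <= size B -> r \in o ->
  exists d, [/\ reach h c d (4 * size o + 2), injective d, d r = last w A,
     (forall x, x != r -> x \in o -> d x \in B) &
     (forall x, x \notin o -> d x = c x)].
Proof.
move=> hs /and5P[Hu HA HB HC HC0] Hc Ho HoA HoB Hr.
have uAB : uniq (w :: A ++ B).
  by apply: (@uniq_legs_sub _ w A B A (B ++ C) _ _ Hu) => //; exact: prefix_subseq.
have uBC : uniq (w :: B ++ C) by apply: (@uniq_legs_sub _ w [::] (B ++ C) A (B ++ C) _ _ Hu) => //; exact: sub0seq.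
have uAC : uniq (w :: A ++ C).
  by apply: (@uniq_legs_sub _ w A C A (B ++ C) _ _ Hu) => //; exact: suffix_subseq.
have uBA : uniq (w :: B ++ A) by rewrite uniq_legsC.
have uCB : uniq (w :: C ++ B) by rewrite uniq_legsC.
have uCA : uniq (w :: C ++ A) by rewrite uniq_legsC.
have dAB := uniq_legs_disj uAB.
have dBC := uniq_legs_disj uBC.
have dAC := uniq_legs_disj uAC.
have /andP[wA wB] := uniq_legs_w uAB.
have /andP[_ wC] := uniq_legs_w uBC.
set spv := w :: A ++ B ++ C.
have Hin : forall (d : Rob -> V) (Q : seq V), {subset Q <= spv} ->
    (forall x, x \notin o -> d x = c x) -> forall x, d x \in Q -> x \in o.
  move=> d Q HQ Hd x; apply: contraTT => Hx; rewrite Hd //; apply/negP => /HQ.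
  by rewrite Ho (negbTE Hx).
have Hoffc : forall x, x \notin o -> c x \notin spv by move=> x; rewrite Ho.
have sAB : {subset rev A ++ w :: B <= spv}.
  by move=> y; rewrite legs_mem !inE !mem_cat => /or3P[] ->; rewrite ?orbT.
have sCB : {subset rev C ++ w :: B <= spv}.
  by move=> y; rewrite legs_mem !inE !mem_cat => /or3P[] ->; rewrite ?orbT.
have [d1 [R1 I1 U1 M1]] := compress_leg hs HA HB uAB Hc (Hin c _ sAB (fun _ _ => erefl)) HoB.
have Hoff1 : forall x, x \notin o -> d1 x = c x.
  by move=> x Hx; apply: U1; apply/negP => /sAB; apply/negP; apply: Hoffc.
have Hpos1 : forall x, x \in o -> (d1 x \in B) || (d1 x \in C).
  move=> x Hx; case E: (c x \in rev A ++ w :: B); first by rewrite M1.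
  rewrite U1 ?E //; move: Hx; rewrite -Ho /spv inE !mem_cat.
  by move: E; rewrite legs_mem => /negbT; rewrite !negb_or => /and3P[/negbTE -> /negbTE -> /negbTE ->].
have [d2 [R2 I2 U2 M2]] := compress_leg hs HC HB uCB I1 (Hin d1 _ sCB Hoff1) HoB.
have Hoff2 : forall x, x \notin o -> d2 x = c x.
  move=> x Hx; rewrite U2 Hoff1 //; apply/negP => /sCB; apply/negP; exact: Hoffc.
have Hpos2 : forall x, x \in o -> d2 x \in B.
  move=> x Hx; apply: M2; rewrite legs_mem; move/orP: (Hpos1 x Hx) => [] ->; by rewrite ?orbT.
have HrB : d2 r \in B := Hpos2 r Hr.
set j := index (d2 r) B.
have Hj : j < size B by rewrite index_mem.
have Hnth : nth w B j = d2 r by rewrite nth_index.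
have uTA : uniq (w :: take j B ++ A).
  by apply: (@uniq_legs_sub _ w _ A B A _ _ uBA) => //; exact: take_sub.
have sTA : {subset rev (take j B) ++ w :: A <= spv}.
  move=> y; rewrite legs_mem => /or3P[/mem_take Hy|/eqP ->|Hy];
    by rewrite /spv !inE !mem_cat ?Hy ?eqxx ?orbT.
have [d3 [R3 I3 U3 M3]] := compress_leg hs (path_take j HB) HA uTA I2 (Hin d2 _ sTA Hoff2) HoA.
have Hoff3 : forall x, x \notin o -> d3 x = c x.
  move=> x Hx; rewrite U3 Hoff2 //; apply/negP => /sTA; apply/negP; exact: Hoffc.
have Hr2Q3 : d2 r \notin rev (take j B) ++ w :: A.
  rewrite legs_mem !negb_or; apply/and3P; split.
  - by apply/negP => /idx_take; rewrite ltnn.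
  - by apply/negP => /eqP E; move: wB; rewrite -E HrB.
  - by apply/negP => HA'; apply: (dAB _ HA' HrB).
have H3r : d3 r = d2 r by rewrite U3.
have Hpos3 : forall x, x \in o -> (d3 x \in A) || (d3 x \in B).
  move=> x Hx; case E: (d2 x \in rev (take j B) ++ w :: A); first by rewrite M3.
  by rewrite U3 ?E // Hpos2 ?orbT.
case EC: C HC0 HC => [|c0 C'] // _ HC.
have Hwc0 : h w c0 by move: HC => /andP[].
have uBc : uniq (w :: take j.+1 B ++ [:: c0]).
  apply: (@uniq_legs_sub _ w _ _ B C _ _ uBC); first exact: take_sub.
  by rewrite EC /= eqxx sub0seq.
set p4 := rev (take j.+1 B) ++ w :: [:: c0].
have Hp4 : is_spath h p4.
  rewrite spathE legs_sorted ?(path_take _ HB) //= ?Hwc0 // legs_uniq //.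
  by rewrite /p4; case: (rev _).
have Hp4h : head (d3 r) p4 = d3 r by rewrite /p4 (take_nth w Hj) rev_rcons /= Hnth H3r.
have Hp4l : last (d3 r) p4 = c0 by rewrite /p4 last_cat.
have Hfree4 : forall x, x != r -> d3 x \notin p4.
  move=> x Hxr; case: (boolP (x \in o)) => Hxo; last first.
    rewrite Hoff3 //; apply/negP => Hp; move: (Hoffc x Hxo); rewrite /spv.
    move: Hp; rewrite /p4 legs_mem !inE !mem_cat => /or3P[/mem_take Hy|/eqP ->|/eqP ->];
      by rewrite ?Hy ?eqxx ?orbT // EC inE eqxx !orbT.
  case E: (d2 x \in rev (take j B) ++ w :: A).
    have HA' : d3 x \in A by rewrite M3.
    rewrite /p4 legs_mem !inE !negb_or; apply/and3P; split.
    - by apply/negP => /mem_take HB'; apply: (dAB _ HA' HB').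
    - by apply/negP => /eqP E'; move: wA; rewrite -E' HA'.
    - apply/negP => /eqP E'; apply: (dAC _ HA'); by rewrite E' EC mem_head.
  rewrite U3 ?E //.
  have HxB := Hpos2 x Hxo.
  move: E; rewrite legs_mem => /negbT; rewrite !negb_or => /and3P[HT _ _].
  rewrite /p4 legs_mem !inE !negb_or; apply/and3P; split.
  - rewrite (take_nth w Hj) mem_rcons inE negb_or HT andbT Hnth.
    by apply/negP => /eqP /I2 E'; move: Hxr; rewrite E' eqxx.
  - by apply/negP => /eqP E'; move: wB; rewrite -E' HxB.
  - apply/negP => /eqP E'; apply: (dBC _ HxB); by rewrite E' EC mem_head.
have R4 := move1 Hp4 Hp4h Hp4l Hfree4.
set d4 := upd d3 r c0 in R4.
have I4 : injective d4.
  apply: upd_inj => // x Hx; apply/negP => /eqP E; move: (Hfree4 x Hx).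
  by rewrite E /p4 mem_cat inE in_cons eqxx !orbT.
have Hoff4 : forall x, x \notin o -> d4 x = c x.
  move=> x Hx; have Hxr : x != r by apply/negP => /eqP E; move: Hx; rewrite E Hr.
  by rewrite /d4 /upd (negbTE Hxr) Hoff3.
have [d5 [R5 I5 U5 M5]] := compress_leg hs HA HB uAB I4 (Hin d4 _ sAB Hoff4) HoB.
have Hc0 : c0 \in C by rewrite EC mem_head.
have Hc0Q5 : c0 \notin rev A ++ w :: B.
  rewrite legs_mem !negb_or; apply/and3P; split.
  - by apply/negP => HA'; apply: (dAC _ HA' Hc0).
  - by apply/negP => /eqP E'; move: wC; rewrite -E' Hc0.
  - by apply/negP => HB'; apply: (dBC _ HB' Hc0).
have H5r : d5 r = c0 by rewrite U5 /d4 /upd eqxx.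
have Hoff5 : forall x, x \notin o -> d5 x = c x.
  move=> x Hx; rewrite U5 Hoff4 //; apply/negP => /sAB; apply/negP; exact: Hoffc.
have Hpos5 : forall x, x != r -> x \in o -> d5 x \in B.
  move=> x Hxr Hxo; apply: M5; rewrite /d4 /upd (negbTE Hxr) legs_mem.
  by move/orP: (Hpos3 x Hxo) => [] ->; rewrite ?orbT.
set p6 := rev [:: c0] ++ w :: A.
have HwA : path h w [:: c0] by rewrite /= Hwc0.
have uc0A : uniq (w :: [:: c0] ++ A).
  apply: (@uniq_legs_sub _ w _ A C A _ _ uCA) => //; by rewrite EC /= eqxx sub0seq.
have Hp6 : is_spath h p6 by rewrite spathE legs_sorted // legs_uniq.
have Hp6h : head (d5 r) p6 = d5 r by rewrite H5r.
have Hp6l : last (d5 r) p6 = last w A by [].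
have Hfree6 : forall x, x != r -> d5 x \notin p6.
  move=> x Hxr; case: (boolP (x \in o)) => Hxo; last first.
    rewrite Hoff5 //; apply/negP => Hp; move: (Hoffc x Hxo); rewrite /spv.
    move: Hp; rewrite /p6 legs_mem !inE !mem_cat => /or3P[/eqP ->|/eqP ->|Hy];
      by rewrite ?Hy ?eqxx ?orbT // Hc0 !orbT.
  have HxB := Hpos5 x Hxr Hxo.
  rewrite /p6 legs_mem !inE !negb_or; apply/and3P; split.
  - by apply/negP => /eqP E'; apply: (dBC _ HxB); rewrite E'.
  - by apply/negP => /eqP E'; move: wB; rewrite -E' HxB.
  - by apply/negP => HA'; apply: (dAB _ HA' HxB).
have R6 := move1 Hp6 Hp6h Hp6l Hfree6.
set d6 := upd d5 r (last w A) in R6.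
have I6 : injective d6.
  apply: upd_inj => // x Hx; apply/negP => /eqP E; move: (Hfree6 x Hx).
  rewrite E /p6 /=; case: (A) => [|a A'] /=; first by rewrite !inE eqxx orbT.
  by rewrite in_cons in_cons mem_last !orbT.
exists d6; split => //.
- rewrite arith6.
  apply: reach_trans R6; apply: reach_trans R5; apply: reach_trans R4.
  by apply: reach_trans R3; apply: reach_trans R2.
- by rewrite /d6 /upd eqxx.
- by move=> x Hxr Hxo; rewrite /d6 /upd (negbTE Hxr); apply: Hpos5.
- move=> x Hx; have Hxr : x != r by apply/negP => /eqP E; move: Hx; rewrite E Hr.
  by rewrite /d6 /upd (negbTE Hxr) Hoff5.
Qed.

Definition canon (Rob V : eqType) (w : V) (A : seq V) (o : seq Rob) (c : Rob -> V) : Rob -> V :=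
  fun x => if x \in o then nth w (rev A) (index x o) else c x.

Lemma size_le_card (Rob : finType) (o : seq Rob) : uniq o -> size o <= #|Rob|.
Proof. by move/card_uniqP <-; apply: max_card. Qed.

Lemma spider_all (Rob : finType) (V : eqType) (h : rel V) w B C (o : seq Rob) :
  forall A (c : Rob -> V),
  symmetric h -> spider h w A B C -> injective c -> uniq o ->
  (forall x, (c x \in w :: A ++ B ++ C) = (x \in o)) ->
  size o <= size A -> size o <= size B ->
  reach h c (canon w A o c) (size o * (4 * #|Rob| + 2)).
Proof.
elim: o => [|r o' IH] A c hs Hsp Hc Huo Ho HoA HoB.
  have -> : canon w A [::] c = c by apply: functional_extensionality.
  exact: reach_refl.
have Hr : r \in r :: o' by rewrite mem_head.
have [d [R1 I1 Hdr Hdo Hdoff]] := bring hs Hsp Hc Ho HoA HoB Hr.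
case: (lastP A) Hsp Ho HoA Hdr => [|A' t] Hsp Ho HoA Hdr; first by [].
move: (Hsp) => /and5P[Hu HA HB HC HC0].
have Hu' : uniq (w :: A' ++ B ++ C).
  apply: subseq_uniq Hu; rewrite /= eqxx; apply: cat_subseq => //.
  by rewrite -cats1 prefix_subseq.
have Hsp' : spider h w A' B C.
  by apply/and5P; split => //; move: HA; rewrite rcons_path => /andP[].
have Htn : t \notin w :: A' ++ B ++ C.
  move: Hu; rewrite /= -cats1 -catA /= !cat_uniq /= !mem_cat !inE negb_or.
  case/and5P => /andP[_]; rewrite negb_or => /andP[Hwt _] _.
  rewrite negb_or => /andP[HtA _]; rewrite negb_or => /andP[HtB HtC] _.
  by rewrite !mem_cat eq_sym (negbTE Hwt) (negbTE HtA) (negbTE HtB) (negbTE HtC).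
rewrite last_rcons in Hdr.
move: Huo; rewrite cons_uniq => /andP[Hro Huo'].
have Hspv : forall y, y \in w :: A' ++ B ++ C -> y \in w :: rcons A' t ++ B ++ C.
  by move=> y; rewrite !inE !mem_cat mem_rcons inE => /orP[->|/or3P[]->]; rewrite ?orbT.
have Ho' : forall x, (d x \in w :: A' ++ B ++ C) = (x \in o').
  move=> x; case: (eqVneq x r) => [->|Hxr].
    by rewrite Hdr (negbTE Htn) (negbTE Hro).
  case: (boolP (x \in r :: o')) => Hxo.
    have Hxo' : x \in o' by move: Hxo; rewrite inE (negbTE Hxr).
    by rewrite Hxo' !inE !mem_cat (Hdo x Hxr Hxo) !orbT.
  have Hxo' : x \notin o' by move: Hxo; rewrite inE negb_or => /andP[].
  rewrite (negbTE Hxo') Hdoff //; apply/negP => /Hspv; by rewrite Ho (negbTE Hxo).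
have HoA' : size o' <= size A' by move: HoA; rewrite size_rcons.
have HoB' : size o' <= size B by apply: leq_trans HoB.
have R2 := IH A' d hs Hsp' I1 Huo' Ho' HoA' HoB'.
have -> : canon w (rcons A' t) (r :: o') c = canon w A' o' d.
  apply: functional_extensionality => x; rewrite /canon.
  case: (eqVneq x r) => [->|Hxr].
    by rewrite mem_head (negbTE Hro) /= eqxx rev_rcons Hdr.
  rewrite inE (negbTE Hxr) /= eq_sym (negbTE Hxr) rev_rcons /=.
  by case: ifP => // Hxo; rewrite Hdoff // inE (negbTE Hxr) Hxo.
rewrite mulSn; apply: reach_trans R2; apply: reach_mono R1.
have Hs : size (r :: o') <= #|Rob| by apply: size_le_card; rewrite cons_uniq Hro Huo'.
by rewrite leq_add2r leq_mul2l Hs orbT.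
Qed.

Lemma adj_sym (V : eqType) (P : seq V) : symmetric (adj_in P).
Proof. by move=> x y; rewrite /adj_in; apply: eq_has => pr; rewrite orbC. Qed.

Lemma hat_sym (V : eqType) (P : seq V) w N : symmetric (hat_edge P w N).
Proof. by move=> x y; rewrite /hat_edge (adj_sym P x y); congr (_ || _); rewrite orbC. Qed.

Lemma adj_sorted (V : eqType) (s : seq V) : sorted (adj_in s) s.
Proof.
elim: s => //= a s IH; case: s IH => //= b t IH.
apply/andP; split; first by rewrite /adj_in /= eqxx.
by apply: sub_path IH => u v; rewrite /adj_in /= => ->; rewrite orbT.
Qed.

Lemma hat_sorted (V : eqType) (P : seq V) w N : sorted (hat_edge P w N) P.
Proof. by apply: sub_sorted (adj_sorted P) => u v; rewrite /hat_edge => ->. Qed.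

Ltac memtac := let Hy := fresh "Hy" in move=> ? Hy; rewrite ?inE ?mem_cat ?inE in Hy *;
  repeat (case/orP: Hy => Hy; try by rewrite Hy ?orbT); try by rewrite Hy ?orbT.

Lemma spider_from (V : eqType) (h : rel V) w x L R :
  path h w L -> path h w R -> uniq (w :: L ++ R) -> h w x -> x != w ->
  x \notin take 1 R -> x \notin L ->
  exists A B C, [/\ spider h w A B C, size L <= size A, size R <= (size B).*2,
     (forall y, y \in w :: L ++ R -> y \in w :: A ++ B ++ C) &
     (forall y, y \in w :: A ++ B ++ C -> y \in x :: w :: L ++ R)].
Proof.
move=> HL HR Hu Hx Hxw HxR1 HxL.
case: (boolP (x \in R)) => HxR; last first.
  exists L, R, [:: x]; split => //.
  - apply/and5P; split => //; last by rewrite /= Hx.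
    have -> : w :: L ++ R ++ [:: x] = rcons (w :: L ++ R) x by rewrite -cats1 /= catA.
    rewrite rcons_uniq Hu andbT.
    by rewrite inE negb_or Hxw mem_cat negb_or HxL HxR.
  - by rewrite -addnn leq_addr.
  - memtac.
  - memtac.
set j := index x R.
have Hj : j < size R by rewrite index_mem.
have Hj0 : 0 < j.
  rewrite lt0n; apply/negP => /eqP Ej; move: HxR1.
  rewrite -(nth_index w HxR) -/j Ej; case: (R) Hj => //= r R' _; by rewrite inE eqxx.
set B1 := take j R; set B2 := drop j R.
have HB1 : path h w B1 by apply: path_take.
have HB2 : path h w B2.
  rewrite /B2 (drop_nth w Hj) /= nth_index // Hx /=.
  move: HR; rewrite -{1}(cat_take_drop j.+1 R) cat_path => /andP[_].
  by rewrite (take_nth w Hj) last_rcons nth_index.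
have HB1n : B1 != [::] by rewrite -size_eq0 size_take Hj -lt0n.
have HB2n : B2 != [::] by rewrite -size_eq0 size_drop subn_eq0 -ltnNge.
have HRs : size R = size B1 + size B2 by rewrite -size_cat cat_take_drop.
have HRm : R =i B1 ++ B2 by move=> y; rewrite cat_take_drop.
have HuB : uniq (w :: L ++ B1 ++ B2) by rewrite cat_take_drop.
have HuB' : uniq (w :: L ++ B2 ++ B1).
  rewrite -(perm_uniq (_ : perm_eq (w :: L ++ B1 ++ B2) _)) //.
  by rewrite perm_cons perm_cat2l perm_catC.
have Hm1 : forall y, y \in w :: L ++ R -> y \in w :: L ++ B1 ++ B2.
  by move=> y; rewrite cat_take_drop.
have Hm2 : forall y, y \in w :: L ++ B1 ++ B2 -> y \in x :: w :: L ++ R.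
  by move=> y; rewrite /B1 /B2 cat_take_drop => Hy; rewrite in_cons Hy orbT.
case: (leqP (size B2) (size B1)) => Hle.
  exists L, B1, B2; split => //.
  - by apply/and5P; split.
  - by rewrite HRs -addnn leq_add2l.
exists L, B2, B1; split => //.
- by apply/and5P; split.
- by rewrite HRs -addnn leq_add2r ltnW.
- move=> y /Hm1; move: y; memtac.
- move=> y Hy; apply: Hm2; move: y Hy; memtac.
Qed.
Lemma arith_m n m : (6 * (n+1) + 2) %/ 3 <= m -> m <= (2 * (6 * (n+1))) %/ 3 ->
  2*n+2 <= m /\ 2*n+2 <= 6*(n+1) - m.
Proof. lia. Qed.
Lemma arith_q : exists a b k0 : nat, 0 < a /\
       forall k, k0 <= k -> k ^ 2 <= a * (6 * (k ^ 2 + 1)) /\ 6 * (k ^ 2 + 1) <= b * k ^ 2.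
Proof.
exists 1, 12, 1; split => // k Hk. have -> : k ^ 2 = k * k by rewrite expnS expn1.
nia.
Qed.
Lemma arith_k k : k <= k ^ 2 + 1.
Proof. have -> : k ^ 2 = k * k by rewrite expnS expn1. nia. Qed.
Lemma arith_final (s k : nat) : s <= k -> s * (4*k+2) + s * (4*k+2) <= 12 * k ^ 6.
Proof.
move=> Hs; case: k Hs => [|k] Hs; first by move: Hs; rewrite leqn0 => /eqP ->.
have H26 : k.+1 ^ 2 <= k.+1 ^ 6 by rewrite leq_pexp2l.
move: H26; have -> : k.+1 ^ 2 = k.+1 * k.+1 by rewrite expnS expn1.
move=> H26.
nia.
Qed.

Lemma arith_half n a b : 2 * n + 2 <= a -> a <= b.*2 -> n + 1 <= b.
Proof. move=> H1 H2; rewrite -leq_double; apply: leq_trans H2; rewrite -mul2n; lia. Qed.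

Lemma arith_n2 n : n + 1 <= 2 * n + 2.
Proof. lia. Qed.

Lemma legs_uniqE (V : eqType) (w : V) X Y : uniq (rev X ++ w :: Y) = uniq (w :: X ++ Y).
Proof.
rewrite (perm_uniq (_ : perm_eq _ (w :: X ++ Y))) //.
have -> : w :: Y = [:: w] ++ Y by [].
have -> : w :: X ++ Y = [:: w] ++ X ++ Y by [].
by rewrite perm_catCA perm_cat2l perm_cat2r perm_rev.
Qed.

Theorem mainTheorem9 :
  exists q : nat -> nat,
    (exists a b k0 : nat, 0 < a /\
       forall k, k0 <= k -> k ^ 2 <= a * q k /\ q k <= b * k ^ 2) /\
    exists C : nat,
      forall (V : finType) (e : rel V) (Rob : finType) (pos : Rob -> V)
             (S : {set Rob}) (P : seq V) (w x1 x2 x3 : V) (pos' : Rob -> V),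
        symmetric e -> irreflexive e ->
        injective pos ->
        strong_haven e (q #|Rob|) P w ->
        uniq [:: x1; x2; x3] -> e w x1 -> e w x2 -> e w x3 ->
        (forall r, r \in S -> pos r \in P) ->
        (forall r, r \notin S -> ~~ hat_vert P [:: x1; x2; x3] (pos r)) ->
        {in S &, injective pos'} ->
        (forall r, r \in S -> pos' r \in P) ->
        exists cs : seq (Rob -> V),
          [/\ chain (slide_move (hat_edge P w [:: x1; x2; x3])) pos cs,
              (forall r, last pos cs r = if r \in S then pos' r else pos r) &
              size cs <= C * #|Rob| ^ 6].
Proof.
exists (fun k => 6 * (k ^ 2 + 1)); split; first exact: arith_q.
exists 12 => V e Rob pos S P w x1 x2 x3 pos' es ei Hpos Hsh Hux Hx1 Hx2 Hx3 HSP HnS Hinj' HP'.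
set k := #|Rob|; set n := k ^ 2.
set N := [:: x1; x2; x3].
set hh := hat_edge P w N.
have hs : symmetric hh by apply: hat_sym.
move: Hsh => /andP[Hh _].
move: Hh; rewrite /haven_for => /and5P[Hsp HsP HwP _ /and3P[_ Hlo Hhi]].
have HP0 : P != [::] by case: (P) Hsp.
have HuP : uniq P by case: (P) Hsp => //= a s /andP[].
have Hh0 : index (head w P) P = 0 by case: (P) HP0 => //= a s _; rewrite eqxx.
set m := index w P.
have HPd : Pdist P (head w P) w = m by rewrite /Pdist Hh0 sub0n subn0 add0n.
rewrite HPd in Hlo Hhi.
have [Hm1 Hm2] := arith_m Hlo Hhi.
have HsP' : size P = (6 * (n + 1)).+1 by apply/eqP.
have Hm : m < size P by rewrite index_mem.
set R := drop m.+1 P; set T := take m P; set L := rev T.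
have HPe : P = T ++ w :: R by rewrite -{1}(cat_take_drop m P) (drop_nth w Hm) nth_index.
have Hsort : sorted hh (T ++ w :: R) by rewrite -HPe; apply: hat_sorted.
move: (Hsort); rewrite sorted_cat_cons => /andP[HsT HR].
have HL : path hh w L.
  by move: HsT; rewrite -(sorted_rev_sym _ hs) rev_rcons.
have HuLR : uniq (w :: L ++ R) by rewrite -legs_uniqE /L revK -HPe.
have HmemP : forall y, (y \in P) = (y \in w :: L ++ R).
  by move=> y; rewrite {1}HPe mem_cat !inE mem_cat mem_rev orbCA.
have HsL : size L = m by rewrite size_rev size_take Hm.
have HsR : size R = 6 * (n + 1) - m by rewrite size_drop HsP' subSS.
set D := take 1 L ++ take 1 R.
have [x HxN HxD] : exists2 x, x \in N & x \notin D.
  case: (boolP (all (fun x => x \in D) N)) => Hall; last first.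
    by move/allPn: Hall => [x Hx Hn]; exists x.
  have := uniq_leq_size Hux (fun y Hy => allP Hall y Hy).
  rewrite size_cat !size_take_min /=.
  by move=> H; have := leq_trans H (leq_add (geq_minl 1 _) (geq_minl 1 _)).
have Hwx : hh w x by rewrite /hh /hat_edge eqxx HxN orbT.
have Hxw : x != w.
  apply/negP => /eqP Exw.
  have : e w x by move: HxN; rewrite !inE => /or3P[] /eqP ->.
  by rewrite Exw (ei w).
have HxD1 : x \notin take 1 L by move: HxD; rewrite mem_cat negb_or => /andP[].
have HxD2 : x \notin take 1 R by move: HxD; rewrite mem_cat negb_or => /andP[].
have [A [B [C [Hspi HsA HsB Hcov1 Hcov2]]]] : exists A B C,
    [/\ spider hh w A B C, 2 * n + 2 <= size A, n + 1 <= size B,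
        (forall y, y \in P -> y \in w :: A ++ B ++ C) &
        (forall y, y \in w :: A ++ B ++ C -> hat_vert P N y)].
  case: (boolP (x \in L)) => HxL.
    have HxR : x \notin R by apply/negP => HxR; apply: (uniq_legs_disj HuLR HxL HxR).
    have HuRL : uniq (w :: R ++ L) by rewrite uniq_legsC.
    have [A [B [C [Hspi HsA HsB Hc1 Hc2]]]] := spider_from HR HL HuRL Hwx Hxw HxD1 HxR.
    exists A, B, C; split => //.
    - by apply: leq_trans HsA; rewrite HsR.
    - by apply: (arith_half _ HsB); rewrite HsL.
    - move=> y; rewrite HmemP => Hy; apply: Hc1; move: y Hy; memtac.
    - move=> y /Hc2; rewrite /hat_vert HmemP inE => /orP[/eqP ->|Hy]; first by rewrite HxN orbT.
      by apply/orP; left; move: y Hy; memtac.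
  have [A [B [C [Hspi HsA HsB Hc1 Hc2]]]] := spider_from HL HR HuLR Hwx Hxw HxD2 HxL.
  exists A, B, C; split => //.
  - by apply: leq_trans HsA; rewrite HsL.
  - by apply: (arith_half _ HsB); rewrite HsR.
  - by move=> y; rewrite HmemP => Hy; apply: Hc1.
  - move=> y /Hc2; rewrite /hat_vert HmemP inE => /orP[/eqP ->|->] //.
    by rewrite HxN orbT.
set o := enum S.
have Huo : uniq o by apply: enum_uniq.
have Hso : size o <= k by rewrite /o -cardE; apply: max_card.
have Hkn : k <= n + 1 by apply: arith_k.
have HoA : size o <= size A by apply: leq_trans Hso _; apply: leq_trans Hkn _; apply: leq_trans (arith_n2 n) HsA.
have HoB : size o <= size B by apply: leq_trans Hso _; apply: leq_trans Hkn HsB.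
set c' := fun r => if r \in S then pos' r else pos r.
have Hc' : injective c'.
  move=> a b; rewrite /c'; case: (boolP (a \in S)) => Ha; case: (boolP (b \in S)) => Hb.
  - exact: Hinj'.
  - by move=> E; move: (HnS b Hb); rewrite /hat_vert -E HP'.
  - by move=> E; move: (HnS a Ha); rewrite /hat_vert E HP'.
  - exact: Hpos.
have Hon : forall (d : Rob -> V), (forall x, x \in S -> d x \in P) ->
    (forall x, x \notin S -> d x = pos x) ->
    forall x, (d x \in w :: A ++ B ++ C) = (x \in o).
  move=> d H1 H2 z; rewrite mem_enum; case: (boolP (z \in S)) => Hz.
    by apply: Hcov1; apply: H1.
  apply/negP => /Hcov2; rewrite H2 //; apply/negP; exact: HnS.
have R1 := spider_all hs Hspi Hpos Huo (Hon pos HSP (fun _ _ => erefl)) HoA HoB.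
have H1' : forall z, z \in S -> c' z \in P by move=> z Hz; rewrite /c' Hz; apply: HP'.
have H2' : forall z, z \notin S -> c' z = pos z by move=> z Hz; rewrite /c' (negbTE Hz).
have R2 := spider_all hs Hspi Hc' Huo (Hon c' H1' H2') HoA HoB.
have Heq : canon w A o c' = canon w A o pos.
  apply: functional_extensionality => z; rewrite /canon; case: ifP => // Hz.
  by rewrite /c' -mem_enum -/o Hz.
rewrite Heq in R2.
have [cs [Hch Hl Hsz]] := reach_trans R1 (reach_sym hs R2).
exists cs; split => //.
- by move=> r; rewrite Hl.
- by apply: leq_trans Hsz _; apply: arith_final.
Qed.
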